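(* A family $\{\Theta_n\}_{n\ge0}$ of lattice congruences ($\Theta_n$ on the weak order $S_n$) is translational if and only if it has the form $\{\mathrm{Tr}(C)_n\}_{n\ge0}$ for some set $C$ of untranslated join-irreducible permutations of various sizes.
   Context: $S_n$: permutations of $[n]$ in one-line notation with the right weak order (inclusion of sets of inverted value pairs), a lattice. Join-irreducibles are the permutations with exactly one descent; $\gamma_*$ is the unique element covered by $\gamma$, and a congruence contracts $\gamma$ if $\gamma\equiv\gamma_*$. For $u\in S_p,v\in S_q$, $u\times v=u_1\cdots u_p(p+v_1)\cdots(p+v_q)\in S_{p+q}$; $1_k$ is the identity of $S_k$. $x\in S_n$ is a translate of $y\in S_k$ if $x=1_p\times y\times1_q$ for some $p,q\ge0$; $x$ is untranslated if $x_1>1$ and $x_n<n$. The family is translational if for all $p,q\ge0$, $u,u'\in S_p$, $v,v'\in S_q$: $u\times v\equiv u'\times v'$ mod $\Theta_{p+q}$ iff $u\equiv u'$ mod $\Theta_p$ and $v\equiv v'$ mod $\Theta_q$. For a set $C$ of untranslated join-irreducibles, $\mathrm{Tr}(C)_n$ is the smallest congruence on $S_n$ contracting every join-irreducible of $S_n$ that is a translate of some element of $C$. *)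

(* Defs.v *)
From mathcomp Require Import all_boot all_order all_fingroup.
Set Implicit Arguments. Unset Strict Implicit. Unset Printing Implicit Defensive.

Local Open Scope group_scope.

(* Permutations of [n] are 'S_n = {perm 'I_n}; in one-line notation w_i = w i
   (0-indexed values). *)

(* Inversion set: pairs of values (a,b), a < b, with b appearing before a. *)
Definition inv_set n (w : 'S_n) : {set 'I_n * 'I_n} :=
  [set ab : ('I_n * 'I_n)%type | (ab.1 < ab.2)%N && ((w^-1) ab.2 < (w^-1) ab.1)%N].

Definition weak_le n (u w : 'S_n) : bool := inv_set u \subset inv_set w.
Definition weak_lt n (u w : 'S_n) : bool := (u != w) && weak_le u w.

Definition is_join n (x y j : 'S_n) : Prop :=
  [/\ weak_le x j, weak_le y j &
      forall z, weak_le x z -> weak_le y z -> weak_le j z].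
Definition is_meet n (x y m : 'S_n) : Prop :=
  [/\ weak_le m x, weak_le m y &
      forall z, weak_le z x -> weak_le z y -> weak_le z m].

Definition lattice_congruence n (R : 'S_n -> 'S_n -> Prop) : Prop :=
  [/\ (forall x, R x x),
      (forall x y, R x y -> R y x),
      (forall x y z, R x y -> R y z -> R x z),
      (forall x y z jx jy, R x y -> is_join x z jx -> is_join y z jy -> R jx jy) &
      (forall x y z mx my, R x y -> is_meet x z mx -> is_meet y z my -> R mx my)].

Definition covers n (u w : 'S_n) : bool :=
  weak_lt u w && [forall z, ~~ (weak_lt u z && weak_lt z w)].
Definition join_irreducible n (w : 'S_n) : bool :=
  #|[set u | covers u w]| == 1%N.

(* R contracts gamma: gamma == gamma_* (the unique element covered by gamma). *)
Definition contracts n (R : 'S_n -> 'S_n -> Prop) (g : 'S_n) : Prop :=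
  exists g0, covers g0 g /\ R g0 g.

Definition pcat_fun p q (u : 'S_p) (v : 'S_q) (i : 'I_(p + q)) : 'I_(p + q) :=
  unsplit (match split i with inl j => inl (u j) | inr k => inr (v k) end).

Lemma pcat_fun_inj p q (u : 'S_p) (v : 'S_q) : injective (pcat_fun u v).
Proof.
move=> i j /(can_inj (@unsplitK p q)).
case Ei: (split i) => [a|a]; case Ej: (split j) => [b|b] // [] /perm_inj E;
  by rewrite -(splitK i) -(splitK j) Ei Ej E.
Qed.

Definition pcat p q (u : 'S_p) (v : 'S_q) : 'S_(p + q) := perm (@pcat_fun_inj p q u v).

Definition translate_of n k (x : 'S_n) (y : 'S_k) : Prop :=
  exists p q (E : (p + k + q)%N = n),
    x = cast_perm E (pcat (pcat (1 : 'S_p) y) (1 : 'S_q)).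

(* Untranslated: x_1 > 1 and x_n < n (1-indexed). *)
Definition untranslated n (x : 'S_n) : bool :=
  [exists i : 'I_n, (val i == 0%N) && (val (x i) != 0%N)] &&
  [exists i : 'I_n, (val i == n.-1) && (val (x i) != n.-1)].

Definition translational (Theta : forall n, 'S_n -> 'S_n -> Prop) : Prop :=
  forall p q (u u' : 'S_p) (v v' : 'S_q),
    Theta (p + q)%N (pcat u v) (pcat u' v') <-> (Theta p u u' /\ Theta q v v').

(* Tr(C)_n: smallest congruence on S_n contracting every join-irreducible of S_n
   that is a translate of some element of C (C k is the part of C in S_k). *)
Definition Tr (C : forall k, {set 'S_k}) n (x y : 'S_n) : Prop :=
  forall R : 'S_n -> 'S_n -> Prop, lattice_congruence R ->
    (forall g : 'S_n, join_irreducible g ->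
       (exists k (c : 'S_k), c \in C k /\ translate_of g c) -> contracts R g) ->
    R x y.

(* Main.v *)
From Stdlib Require Import Relation_Operators Operators_Properties ClassicalEpsilon.
Require Import Defs.
From mathcomp Require Import all_boot all_order all_fingroup zify.
Set Implicit Arguments. Unset Strict Implicit. Unset Printing Implicit Defensive.
Local Open Scope group_scope.

Lemma card_ltm n m : m <= n -> #|[pred i : 'I_n | i < m]| = m.
Proof.
move=> le; rewrite -sum1_card.
have := big_ord_narrow_cond (op := addn) (idx := 0) (P := xpredT) (F := fun _ => 1%N) le.
move=> /= E. rewrite (eq_bigl (fun i : 'I_n => true && (i < m))) //.
by rewrite E sum1_card card_ord.
Qed.

Section Basic.
Variable n : nat.
Implicit Types u w : 'S_n.

Definition posn w (x : nat) : nat :=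
  match (insub x : option 'I_n) with Some i => val (w^-1 i) | None => x end.

Lemma posnE w (i : 'I_n) : posn w i = w^-1 i.
Proof. by rewrite /posn valK. Qed.

Lemma posn_out w x : n <= x -> posn w x = x.
Proof. by move=> h; rewrite /posn insubF // ltnNge h. Qed.

Lemma posn_lt w x : x < n -> posn w x < n.
Proof. by move=> h; rewrite (_ : x = Ordinal h) // posnE. Qed.

Lemma posn_inj w x y : x < n -> y < n -> posn w x = posn w y -> x = y.
Proof.
move=> hx hy; rewrite (_ : x = Ordinal hx) // (_ : y = Ordinal hy) // !posnE.
by move/val_inj/perm_inj => ->.
Qed.

Lemma posn_val w (i : 'I_n) : posn w (w i) = i.
Proof. by rewrite posnE permK. Qed.

Lemma posn_surj w m : m < n -> exists2 z, z < n & posn w z = m.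
Proof. by move=> h; exists (w (Ordinal h)) => //; rewrite posn_val. Qed.

Definition invn w a b := [&& a < b, b < n & posn w b < posn w a].

Definition valid (I : nat -> nat -> bool) :=
  [/\ forall a b, I a b -> (a < b) && (b < n),
      forall a b c, I a b -> I b c -> I a c &
      forall a b c, a < b -> b < c -> I a c -> I a b || I b c].

Lemma invn_valid w : valid (invn w).
Proof.
split.
- by move=> a b /and3P[-> -> _].
- move=> a b c /and3P[ab bn pba] /and3P[bc cn pcb].
  by rewrite /invn (ltn_trans ab bc) cn (ltn_trans pcb pba).
- move=> a b c ab bc /and3P[ac cn pca].
  have bn : b < n by apply: ltn_trans cn.
  rewrite /invn ab bc bn cn /=.
  case: (ltngtP (posn w b) (posn w a)) => //= h.
  + by apply: ltn_trans pca h.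
  + by move/(posn_inj bn (ltn_trans ab bn)): h => E; rewrite E ltnn in ab.
Qed.

Definition before (I : nat -> nat -> bool) (s t : nat) := if s < t then ~~ I s t else I t s.

Lemma posn_count w v : v < n -> posn w v = #|[pred u : 'I_n | before (invn w) u v]|.
Proof.
move=> vn.
have -> : #|[pred u : 'I_n | before (invn w) u v]| = #|[pred u : 'I_n | w^-1 u < posn w v]|.
  apply: eq_card => u; rewrite !inE /before /invn.
  case: (ltngtP u v) => [uv|vu|uv] /=.
  + rewrite vn /= -leqNgt leq_eqVlt posnE.
    case: eqP => //= E.
    by rewrite -posnE in E; have F := posn_inj (ltn_ord u) vn E; rewrite F ltnn in uv.
  + by rewrite ltn_ord posnE.
  + by rewrite -posnE uv ltnn.
have -> : #|[pred u : 'I_n | w^-1 u < posn w v]| = #|(w^-1) @^-1: [set i : 'I_n | i < posn w v]|.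
  by apply: eq_card => u; rewrite !inE.
by rewrite card_preimset ?cardsE ?card_ltm //; [apply: ltnW; apply: posn_lt | apply: perm_inj].
Qed.

Lemma invn_inj u w : (forall a b, invn u a b = invn w a b) -> u = w.
Proof.
move=> E.
have P : forall i : 'I_n, u^-1 i = w^-1 i.
  move=> i; apply: ord_inj; rewrite -!posnE !posn_count //.
  apply: eq_card => x. by rewrite !unfold_in /= /before !E.
by apply: invg_inj; apply/permP.
Qed.

Lemma weak_leP u w : reflect (forall a b, invn u a b -> invn w a b) (weak_le u w).
Proof.
apply: (iffP subsetP) => H.
- move=> a b hab; case/and3P: (hab) => ab bn _.
  have an := ltn_trans ab bn.
  have h1 : (Ordinal an, Ordinal bn) \in inv_set u.
    by rewrite inE /= ab /= -(posnE u (Ordinal an)) -(posnE u (Ordinal bn)); case/and3P: hab.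
  move: (H _ h1); rewrite inE /= -(posnE w (Ordinal an)) -(posnE w (Ordinal bn)) => /andP[_ h].
  by rewrite /invn ab bn.
- case=> a b; rewrite !inE /= => /andP[ab pba].
  have h1 : invn u a b by rewrite /invn ab (ltn_ord b) !posnE pba.
  by move: (H _ _ h1); rewrite /invn !posnE ab => /and3P[_ _ ->].
Qed.

End Basic.

Section Tool.
Variable n : nat.
Implicit Types u w : 'S_n.
Variable I : nat -> nat -> bool.
Hypothesis VI : valid n I.

Lemma V1 a b : I a b -> a < b. Proof. by case: VI => h _ _ /h /andP[]. Qed.
Lemma V1n a b : I a b -> b < n. Proof. by case: VI => h _ _ /h /andP[]. Qed.
Lemma V2 a b c : I a b -> I b c -> I a c. Proof. by case: VI => _ h _; apply: h. Qed.
Lemma V3 a b c : a < b -> b < c -> I a c -> I a b || I b c. Proof. by case: VI => _ _ h; apply: h. Qed.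

Lemma before_irr a : before I a a = false.
Proof. by rewrite /before ltnn; apply/negP => /V1; rewrite ltnn. Qed.

Lemma before_total a b : a != b -> before I a b || before I b a.
Proof.
rewrite /before => nab; case: (ltngtP a b) => h.
- by case: (I a b).
- by case: (I b a).
- by rewrite h eqxx in nab.
Qed.

Lemma before_asym a b : before I a b -> ~~ before I b a.
Proof.
rewrite /before; case: (ltngtP a b) => h /=.
- by case: (I a b).
- by case: (I b a).
- by move=> /V1; rewrite h ltnn.
Qed.

Lemma before_trans a b c : before I a b -> before I b c -> before I a c.
Proof.
rewrite /before.
case: (ltngtP a b) => ab; case: (ltngtP b c) => bc; case: (ltngtP a c) => ac /=
  => h1 h2; try (exfalso; lia).
all: try (by move: h1 => /V1; lia); try (by move: h2 => /V1; lia).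
- apply/negP => Iac; have := V3 ab bc Iac; by rewrite (negbTE h1) (negbTE h2).
- apply/negP => Iac; by rewrite (V2 Iac h2) in h1.
- have := V3 ac ab h2; by rewrite (negbTE h1) orbF.
- by subst; rewrite h2 in h1.
- apply/negP => Iac; by rewrite (V2 h1 Iac) in h2.
- have := V3 bc ac h1; by rewrite (negbTE h2).
- by subst; rewrite h1 in h2.
- exact: V2 h2 h1.
Qed.

Definition Sb (v : nat) := [pred u : 'I_n | before I u v].

Lemma Sb_lt (x y : 'I_n) : before I x y -> #|Sb x| < #|Sb y|.
Proof.
move=> bxy; apply: proper_card; apply/properP; split.
- by apply/subsetP => z; rewrite !inE => bzx; apply: before_trans bzx bxy.
- by exists x; rewrite !inE ?before_irr.
Qed.

Lemma Sb_n (v : 'I_n) : #|Sb v| < n.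
Proof.
suff: #|Sb v| < #|'I_n| by rewrite card_ord.
apply: proper_card; apply/properP; split.
- by apply/subsetP.
- by exists v; rewrite ?inE ?before_irr.
Qed.

End Tool.

Definition pofr_fun n (I : nat -> nat -> bool) : {ffun 'I_n -> 'I_n} :=
  [ffun v : 'I_n => insubd v #|Sb n I v|].
Definition perm_of_rel n (I : nat -> nat -> bool) : 'S_n := (insubd (1 : 'S_n) (pofr_fun n I))^-1.

Section Tool2.
Variable n : nat.
Variable I : nat -> nat -> bool.
Hypothesis VI : valid n I.

Lemma pofr_val (v : 'I_n) : val (pofr_fun n I v) = #|Sb n I v|.
Proof. by rewrite ffunE val_insubd Sb_n. Qed.

Lemma pofr_inj : injectiveb (pofr_fun n I).
Proof.
apply/injectiveP => x y E.
have : val (pofr_fun n I x) = val (pofr_fun n I y) by rewrite E.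
rewrite !pofr_val // => E2; apply/eqP; apply/negP => /negP nxy.
case/orP: (before_total I nxy) => h; have := Sb_lt VI h; by rewrite E2 ltnn.
Qed.

Lemma posn_pofr (v : nat) : v < n -> posn (perm_of_rel n I) v = #|Sb n I v|.
Proof.
move=> vn; rewrite (_ : v = Ordinal vn) // posnE /perm_of_rel invgK.
rewrite -pvalE.
rewrite (_ : pval (insubd (1 : 'S_n) (pofr_fun n I)) = pofr_fun n I); first by rewrite pofr_val.
by rewrite -[pval _]/(val _) val_insubd pofr_inj.
Qed.

Lemma invn_pofr a b : invn (perm_of_rel n I) a b = I a b.
Proof.
rewrite /invn; case Iab: (I a b).
- have ab := V1 VI Iab; have bn := V1n VI Iab; have an := ltn_trans ab bn.
  rewrite ab bn !posn_pofr //.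
  rewrite (_ : a = Ordinal an) // (_ : b = Ordinal bn) //; apply: Sb_lt => //.
  by rewrite /before /= ltnNge (ltnW ab).
- case: (ltnP a b) => //= ab; case: (ltnP b n) => //= bn.
  have an := ltn_trans ab bn.
  rewrite !posn_pofr // (_ : a = Ordinal an) // (_ : b = Ordinal bn) //.
  rewrite ltnNge ltnW // Sb_lt // /before /= ab Iab //.
Qed.

End Tool2.

Definition minus (I : nat -> nat -> bool) (x y a b : nat) := I a b && ((a != x) || (b != y)).

Section Cov.
Variable n : nat.
Implicit Types u w z : 'S_n.

Lemma invn_lt w a b : invn w a b -> a < b. Proof. by case/and3P. Qed.
Lemma invn_n w a b : invn w a b -> b < n. Proof. by case/and3P. Qed.
Lemma invn_pos w a b : invn w a b -> posn w b < posn w a. Proof. by case/and3P. Qed.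

Lemma leI u w a b : weak_le u w -> invn u a b -> invn w a b.
Proof. by move/weak_leP; apply. Qed.

Lemma weak_le_refl w : weak_le w w. Proof. exact: subxx. Qed.

Lemma weak_le_trans u w z : weak_le u w -> weak_le w z -> weak_le u z.
Proof. exact: subset_trans. Qed.

Lemma weak_le_antisym u w : weak_le u w -> weak_le w u -> u = w.
Proof.
move=> /weak_leP h1 /weak_leP h2; apply: invn_inj => a b.
by apply/idP/idP; [apply: h1 | apply: h2].
Qed.

Lemma not_le_ex u z : ~~ weak_le z u -> exists a b, invn z a b && ~~ invn u a b.
Proof.
move=> H.
case: (boolP [exists a : 'I_n, exists b : 'I_n, invn z a b && ~~ invn u a b]).
- by move/existsP => [a /existsP [b h]]; exists a, b.
- move=> /negP nh; case/negP: H; apply/weak_leP => a b hab.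
  apply/negPn/negP => nu; apply: nh.
  have bn := invn_n hab; have an := ltn_trans (invn_lt hab) bn.
  apply/existsP; exists (Ordinal an); apply/existsP; exists (Ordinal bn); by rewrite hab nu.
Qed.

Lemma lt_ex u z : u != z -> weak_le u z -> exists a b, invn z a b && ~~ invn u a b.
Proof.
move=> ne le; apply: not_le_ex; apply/negP => le2.
by rewrite (weak_le_antisym le le2) eqxx in ne.
Qed.

Lemma covers_minus u w x y : invn w x y ->
  (forall a b, invn u a b = minus (invn w) x y a b) -> covers u w.
Proof.
move=> Ixy E.
have le : weak_le u w by apply/weak_leP => a b; rewrite E => /andP[].
have ne : u != w.
  apply/eqP => uw; have := E x y; rewrite /minus Ixy !eqxx uw Ixy //.
rewrite /covers /weak_lt ne le /=; apply/forallP => z; apply/negP.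
move=> /andP[/andP[uz luz] /andP[zw lzw]].
have [a [b /andP[za nua]]] := lt_ex uz luz.
have wab := leI lzw za.
have : ~~ minus (invn w) x y a b by rewrite -E.
rewrite /minus wab /= negb_or !negbK => /andP[/eqP ax /eqP bx]; subst a b.
have lwz : weak_le w z.
  apply/weak_leP => c d wcd.
  case: (boolP ((c != x) || (d != y))) => h.
  + by apply: (leI luz); rewrite E /minus wcd h.
  + by move: h; rewrite negb_or !negbK => /andP[/eqP -> /eqP ->].
by rewrite (weak_le_antisym lzw lwz) eqxx in zw.
Qed.

Definition desc w x y := invn w x y && (posn w x == (posn w y).+1).

Lemma desc_exists u w : weak_le u w -> u != w -> exists x y, desc w x y /\ ~~ invn u x y.
Proof.
move=> le ne.
have [a0 [b0 /andP[w0 u0]]] := lt_ex ne le.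
pose P d := [exists x : 'I_n, exists y : 'I_n,
   [&& invn w x y, ~~ invn u x y & posn w x - posn w y == d]].
have exP : exists d, P d.
  exists (posn w a0 - posn w b0).
  have bn := invn_n w0; have an := ltn_trans (invn_lt w0) bn.
  apply/existsP; exists (Ordinal an); apply/existsP; exists (Ordinal bn).
  by rewrite w0 u0 eqxx.
case: (ex_minnP exP) => d /existsP [x /existsP [y /and3P [wxy uxy /eqP dxy]]] mind.
have minP : forall a b, invn w a b -> posn w a - posn w b < d -> invn u a b.
  move=> a b wab lt; apply/negPn/negP => nu.
  have bn := invn_n wab; have an := ltn_trans (invn_lt wab) bn.
  have : P (posn w a - posn w b).
    apply/existsP; exists (Ordinal an); apply/existsP; exists (Ordinal bn).
    by rewrite wab nu eqxx.
  by move/mind; rewrite leqNgt lt.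
exists x, y; split => //; rewrite /desc wxy /=.
have pyx := invn_pos wxy.
case: (ltnP (posn w y).+1 (posn w x)) => h; last first.
  by apply/eqP; apply/anti_leq; rewrite h pyx.
exfalso.
have yn := invn_n wxy; have xn := ltn_trans (invn_lt wxy) yn.
have xy := invn_lt wxy.
have mn : (posn w y).+1 < n by apply: ltn_trans h (posn_lt _ xn).
have [z zn pz] := posn_surj w mn.
have zx : z != x by apply/eqP => E; subst z; rewrite pz ltnn in h.
have zy : z != y by apply/eqP => E; subst z; lia.
case: (ltngtP x z) => xz; last by rewrite xz eqxx in zx.
- case: (ltngtP z y) => zy2; last by rewrite zy2 eqxx in zy.
  +
    have h1 : invn u x z by apply: minP; rewrite /invn ?xz ?zn ?pz /=; lia.
    have h2 : invn u z y by apply: minP; rewrite /invn ?zy2 ?yn ?pz /=; lia.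
    case: (invn_valid u) => _ T _.
    by rewrite (T _ _ _ h1 h2) in uxy.
  +
    have h1 : invn u x z by apply: minP; rewrite /invn ?xz ?zn ?pz /=; lia.
    have h2 : ~~ invn u y z.
      apply/negP => /(leI le); rewrite /invn pz; lia.
    case: (invn_valid u) => _ _ C.
    by have := C _ _ _ xy zy2 h1; rewrite (negbTE uxy) (negbTE h2).
-
  have h1 : invn u z y by apply: minP; rewrite /invn ?yn ?pz /=; lia.
  have h2 : ~~ invn u z x.
    apply/negP => /(leI le); rewrite /invn pz; lia.
  case: (invn_valid u) => _ _ C.
  by have := C _ _ _ xz xy h1; rewrite (negbTE uxy) (negbTE h2).
Qed.


Lemma desc_valid w x y : desc w x y -> valid n (minus (invn w) x y).
Proof.
case/andP=> wxy /eqP pxy.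
have yn := invn_n wxy; have xy := invn_lt wxy; have xn := ltn_trans xy yn.
case: (invn_valid w) => V1 T C.
split.
- by move=> a b /andP[/V1].
- move=> a b c /andP[wab nab] /andP[wbc nbc]; rewrite /minus (T _ _ _ wab wbc) /=.
  case: (eqVneq a x) => [ax|//]; case: (eqVneq c y) => [cy|//]; subst a c; exfalso.
  have := invn_pos wab; have := invn_pos wbc; lia.
- move=> a b c ab bc /andP[wac nac]; rewrite /minus.
  have cn := invn_n wac; have bn := ltn_trans bc cn; have an := ltn_trans ab bn.
  have pca := invn_pos wac.
  case/orP: (C _ _ _ ab bc wac) => h.
  + case: (boolP ((a != x) || (b != y))) => hab; first by rewrite h.
    move: hab; rewrite negb_or !negbK => /andP[/eqP ax /eqP bx]; subst a b.
    have : posn w c != posn w y.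
      by apply/eqP => /(posn_inj cn yn) E; subst c; rewrite ltnn in bc.
    move=> ne.
    have wyc : invn w y c by rewrite /invn bc cn /=; lia.
    by rewrite wyc andbF /=; apply/orP; left; apply/eqP => E; rewrite E ltnn in xy.
  + case: (boolP ((b != x) || (c != y))) => hbc; first by rewrite h orbT.
    move: hbc; rewrite negb_or !negbK => /andP[/eqP bx /eqP cy]; subst b c.
    have : posn w a != posn w x.
      by apply/eqP => /(posn_inj an xn) E; subst a; rewrite ltnn in ab.
    move=> ne.
    have wax : invn w a x by rewrite /invn ab xn /=; lia.
    by rewrite wax andbF orbF /=; apply/orP; left; apply/eqP => E; rewrite E ltnn in ab.
Qed.

Lemma covers_char u w : covers u w ->
  exists x y, desc w x y /\ (forall a b, invn u a b = minus (invn w) x y a b).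
Proof.
case/andP => /andP[ne le] /forallP nz.
have [x [y [d nu]]] := desc_exists le ne.
set w' := perm_of_rel n (minus (invn w) x y).
have Iw' := invn_pofr (desc_valid d).
have le1 : weak_le u w'.
  apply/weak_leP => a b h; rewrite Iw' /minus (leI le h) /=.
  case: (eqVneq a x) => [ax|//]; case: (eqVneq b y) => [bx|//]; subst a b.
  by rewrite h in nu.
have lt2 : weak_lt w' w.
  case/andP: (covers_minus (andP d).1 (fun a b => Iw' a b)) => h _; exact h.
have := nz w'; rewrite lt2 andbT /weak_lt le1 andbT negbK => /eqP uw'.
by exists x, y; split => // a b; rewrite uw' Iw'.
Qed.

Lemma desc_covers w x y : desc w x y -> covers (perm_of_rel n (minus (invn w) x y)) w.
Proof.
move=> d; apply: (covers_minus (andP d).1) => a b; by rewrite invn_pofr //; apply: desc_valid.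
Qed.

Lemma minus_eq w x y x' y' : invn w x y -> invn w x' y' ->
  (forall a b, minus (invn w) x y a b = minus (invn w) x' y' a b) -> x = x' /\ y = y'.
Proof.
move=> h h' E; have := E x y; rewrite /minus h !eqxx /=.
by case: (eqVneq x x') => [->|ne]; case: (eqVneq y y') => [->|ne2].
Qed.

Lemma JI_desc w : join_irreducible w <->
  exists x y, desc w x y /\ forall x' y', desc w x' y' -> x' = x /\ y' = y.
Proof.
split.
- move=> /cards1P [u0 E].
  have : u0 \in [set u | covers u w] by rewrite E inE.
  rewrite inE => /covers_char [x [y [d Eu]]].
  exists x, y; split => // x' y' d'.
  have : perm_of_rel n (minus (invn w) x' y') \in [set u | covers u w].
    by rewrite inE desc_covers.
  rewrite E inE => /eqP E2.
  have E3 : forall a b, minus (invn w) x' y' a b = minus (invn w) x y a b.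
    by move=> a b; rewrite -Eu -E2 invn_pofr //; apply: desc_valid.
  by case: (minus_eq (andP d').1 (andP d).1 E3).
- move=> [x [y [d U]]]; apply/cards1P; exists (perm_of_rel n (minus (invn w) x y)).
  apply/setP => u; rewrite !inE; apply/idP/eqP.
  + move/covers_char => [x' [y' [d' Eu]]]; case: (U _ _ d') => ? ?; subst x' y'.
    by apply: invn_inj => a b; rewrite Eu invn_pofr //; apply: desc_valid.
  + by move=> ->; apply: desc_covers.
Qed.

Lemma JI_cover_uniq w u u' : join_irreducible w -> covers u w -> covers u' w -> u = u'.
Proof.
move=> /cards1P [u0 E] c c'.
have : u \in [set u | covers u w] by rewrite inE.
have : u' \in [set u | covers u w] by rewrite inE.
by rewrite E !inE => /eqP -> /eqP ->.
Qed.

End Cov.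

Section Pcat.
Variables p q : nat.
Implicit Types (u : 'S_p) (v : 'S_q).

Lemma pcat_l u v (j : 'I_p) : pcat u v (lshift q j) = lshift q (u j).
Proof.
rewrite /pcat permE /pcat_fun.
by have -> : split (lshift q j) = inl j := unsplitK (inl j).
Qed.

Lemma pcat_r u v (k : 'I_q) : pcat u v (rshift p k) = rshift p (v k).
Proof.
rewrite /pcat permE /pcat_fun.
by have -> : split (rshift p k) = inr k := unsplitK (inr k).
Qed.

Lemma pcat_inv u v : (pcat u v)^-1 = pcat u^-1 v^-1.
Proof.
apply/permP => x; apply: (@perm_inj _ (pcat u v)); rewrite permKV.
rewrite -(splitK x); case: (split x) => j /=.
- by rewrite pcat_l pcat_l permKV.
- by rewrite pcat_r pcat_r permKV.
Qed.

Lemma posn_pcat u v x : posn (pcat u v) x =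
  if x < p then posn u x else if x < p + q then p + posn v (x - p) else x.
Proof.
case: (ltnP x p) => xp.
- have E : x = lshift q (Ordinal xp) :> nat by [].
  by rewrite {1}E posnE pcat_inv pcat_l /= -(posnE u (Ordinal xp)).
- case: (ltnP x (p + q)) => xpq; last by rewrite posn_out.
  have k : x - p < q by lia.
  have E : x = rshift p (Ordinal k) :> nat by rewrite /= subnKC.
  by rewrite {1}E posnE pcat_inv pcat_r /= -(posnE v (Ordinal k)).
Qed.

Lemma invn_pcat u v a b : invn (pcat u v) a b =
  if b < p then invn u a b else (p <= a) && invn v (a - p) (b - p).
Proof.
rewrite /invn !posn_pcat.
have hu : forall x, x < p -> posn u x < p := fun x => posn_lt u (x:=x).
case: (ltnP b p) => bp; case: (ltnP a p) => ap; case: (ltnP b (p + q)) => bq;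
  case: (ltnP a b) => ab /=; try (exfalso; lia); try done.
- apply/negbTE; rewrite -leqNgt; apply: leq_trans (ltnW (hu _ ap)) (leq_addr _ _).
- rewrite (_ : a < p + q); last by apply: ltn_trans ab bq.
  rewrite ltn_add2l (ltn_sub2r (leq_ltn_trans ap ab) ab) (_ : b - p < q) //.
  by rewrite ltn_subLR.
all: symmetry; apply/negbTE; apply/negP => /and3P[h1 h2 _]; clear hu; lia.
Qed.


End Pcat.

Lemma posn1 n x : posn (1 : 'S_n) x = x.
Proof.
case: (ltnP x n) => xn; last by rewrite posn_out.
by rewrite (_ : x = Ordinal xn) // posnE invg1 perm1.
Qed.

Lemma invn1 n a b : invn (1 : 'S_n) a b = false.
Proof. by rewrite /invn !posn1; case: (ltnP a b) => //= ab; rewrite [b < a]ltnNge (ltnW ab) andbF. Qed.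

Lemma posn_cast m n (E : m = n) (w : 'S_m) x : posn (cast_perm E w) x = posn w x.
Proof. by case: n / E; rewrite cast_perm_id. Qed.

Lemma invn_cast m n (E : m = n) (w : 'S_m) a b : invn (cast_perm E w) a b = invn w a b.
Proof. by case: n / E; rewrite cast_perm_id. Qed.

Definition tr a k b (c : 'S_k) : 'S_(a + k + b) := pcat (pcat (1 : 'S_a) c) (1 : 'S_b).

Section Tr.
Variables a k b : nat.
Variable c : 'S_k.

Lemma invn_tr x y : invn (tr a b c) x y = (a <= x) && invn c (x - a) (y - a).
Proof.
rewrite /tr invn_pcat invn1 andbF invn_pcat invn1.
case: (ltnP y (a + k)) => yak; case: (ltnP y a) => ya //=.
- symmetry; apply/negbTE; apply/negP => /andP[_ /invn_lt]; rewrite (_ : y - a = 0) //; lia.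
- symmetry; apply/negbTE; apply/negP => /andP[_ /invn_lt]; rewrite (_ : y - a = 0) //; lia.
- symmetry; apply/negbTE; apply/negP => /andP[_ /invn_n]; lia.
Qed.

Lemma posn_tr x : posn (tr a b c) x =
  if x < a then x else if x < a + k then a + posn c (x - a) else x.
Proof.
rewrite /tr posn_pcat posn1 posn_pcat posn1.
case: (ltnP x (a + k)) => xak; case: (ltnP x a) => xa //=.
all: by case: ifP => _ //; rewrite subnKC.
Qed.

Lemma desc_tr x y : desc (tr a b c) x y = (a <= x) && desc c (x - a) (y - a).
Proof.
rewrite /desc invn_tr.
case: (boolP (a <= x)) => ax //=.
case: (boolP (invn c (x - a) (y - a))) => h //=.
have := invn_lt h; have := invn_n h => h1 h2.
have e1 : (x < a) = false by apply/negbTE; rewrite -leqNgt.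
have e2 : (y < a) = false by apply/negbTE; rewrite -leqNgt; apply: leq_trans ax (ltnW _); lia.
have e3 : x < a + k by lia.
have e4 : y < a + k by lia.
rewrite !posn_tr e1 e2 e3 e4.
apply/eqP/eqP; lia.
Qed.

Lemma JI_tr : join_irreducible (tr a b c) <-> join_irreducible c.
Proof.
rewrite !JI_desc; split.
- move=> [x [y [d U]]]; move: d; rewrite desc_tr => /andP[ax d].
  exists (x - a), (y - a); split => // x' y' d'.
  have : desc (tr a b c) (x' + a) (y' + a) by rewrite desc_tr leq_addl !addnK.
  by move/U => [<- <-]; rewrite !addnK.
- move=> [x [y [d U]]]; exists (x + a), (y + a); split.
    by rewrite desc_tr leq_addl !addnK.
  move=> x' y' d'; have := d'; rewrite desc_tr => /andP[ax /U [E1 E2]].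
  have := invn_lt (andP d').1 => h; split; lia.
Qed.

End Tr.

Lemma desc_cast m n (E : m = n) (w : 'S_m) x y : desc (cast_perm E w) x y = desc w x y.
Proof. by case: n / E; rewrite cast_perm_id. Qed.

Lemma JI_cast m n (E : m = n) (w : 'S_m) : join_irreducible (cast_perm E w) = join_irreducible w.
Proof. by case: n / E; rewrite cast_perm_id. Qed.

Section Untr.
Variable k : nat.
Implicit Type c : 'S_k.

Lemma untr_of_inv c t s : invn c 0 t -> invn c s k.-1 -> untranslated c.
Proof.
move=> h1 h2.
have k0 : 0 < k by have := invn_n h1; have := invn_lt h1; lia.
have k1 : k.-1 < k by lia.
rewrite /untranslated; apply/andP; split; apply/existsP.
- exists (Ordinal k0); rewrite /= ?eqxx /=; apply/eqP => E.
  have := posn_val c (Ordinal k0); rewrite E /= => P0.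
  by have := invn_pos h1; rewrite P0.
- exists (Ordinal k1); rewrite /= ?eqxx /=; apply/eqP => E.
  have := posn_val c (Ordinal k1); rewrite E /= => P0.
  have := invn_pos h2; rewrite P0.
  have := posn_lt c (ltn_trans (invn_lt h2) k1); lia.
Qed.

Lemma desc_of_untr c : untranslated c -> (exists t, desc c 0 t) /\ (exists s, desc c s k.-1).
Proof.
case/andP => /existsP [i /andP[/eqP i0 ci]] /existsP [j /andP[/eqP jk cj]].
have k0 : 0 < k by have := ltn_ord i; lia.
split.
- have pv := posn_val c i; rewrite i0 in pv.
  have p0 : posn c 0 != 0.
    apply/eqP => E; have F := posn_inj (ltn_ord (c i)) k0 (etrans pv (esym E)).
    exact: (negP ci (introT eqP F)).
  have mk : (posn c 0).-1 < k by have := posn_lt c k0; lia.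
  have [t tk pt] := posn_surj c mk.
  have t0 : t != 0.
    by apply/eqP => E; subst t; move: pt p0; lia.
  exists t; rewrite /desc /invn pt tk; apply/andP; split; [apply/and3P; split|]; try lia; apply/eqP; lia.
- have pv := posn_val c j; rewrite jk in pv.
  have k1 : k.-1 < k by lia.
  have p0 : posn c k.-1 != k.-1.
    apply/eqP => E; have F := posn_inj (ltn_ord (c j)) k1 (etrans pv (esym E)).
    exact: (negP cj (introT eqP F)).
  have mk : (posn c k.-1).+1 < k by have := posn_lt c k1; lia.
  have [s sk ps] := posn_surj c mk.
  have s0 : s != k.-1.
    by apply/eqP => E; subst s; move: ps; lia.
  exists s; rewrite /desc /invn ps k1; apply/andP; split; [apply/and3P; split|]; try lia; apply/eqP; lia.
Qed.

Lemma untrJI c : untranslated c -> join_irreducible c ->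
  desc c 0 k.-1 /\ (forall x y, desc c x y -> x = 0 /\ y = k.-1).
Proof.
move=> ut /JI_desc [x [y [d U]]].
case: (desc_of_untr ut) => [[t dt] [s ds]].
case: (U _ _ dt) => E1 E2; case: (U _ _ ds) => E3 E4; subst.
by split => // x' y' /U.
Qed.

End Untr.

Section Res.
Variables p q : nat.
Implicit Types w z : 'S_(p + q).

Definition relL w := fun a b => (b < p) && invn w a b.
Definition relH w := fun a b => invn w (p + a) (p + b).

Lemma validL w : valid p (relL w).
Proof.
case: (invn_valid w) => V1 T C; split.
- by move=> a b /andP[bp /invn_lt ->].
- by move=> a b c /andP[_ h1] /andP[cp h2]; rewrite /relL cp (T _ _ _ h1 h2).
- move=> a b c ab bc /andP[cp h]; rewrite /relL cp (ltn_trans bc cp) /=; exact: C.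
Qed.

Lemma validH w : valid q (relH w).
Proof.
case: (invn_valid w) => V1 T C; split.
- by move=> a b h; have := invn_lt h; have := invn_n h; lia.
- by move=> a b c h1 h2; apply: T h1 h2.
- move=> a b c ab bc h; apply: C h; lia.
Qed.

Definition resL w : 'S_p := perm_of_rel p (relL w).
Definition resH w : 'S_q := perm_of_rel q (relH w).

Lemma invn_resL w a b : invn (resL w) a b = (b < p) && invn w a b.
Proof. exact: (invn_pofr (validL w)). Qed.

Lemma invn_resH w a b : invn (resH w) a b = invn w (p + a) (p + b).
Proof. exact: (invn_pofr (validH w)). Qed.

Lemma resL_pcat (u : 'S_p) (v : 'S_q) : resL (pcat u v) = u.
Proof.
apply: invn_inj => a b; rewrite invn_resL invn_pcat.
by case: (ltnP b p) => //= bp; apply/esym/negbTE/negP => /invn_n; lia.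
Qed.

Lemma resH_pcat (u : 'S_p) (v : 'S_q) : resH (pcat u v) = v.
Proof.
apply: invn_inj => a b; rewrite invn_resH invn_pcat.
by rewrite ltnNge leq_addr /= leq_addr /= !addKn.
Qed.

Lemma resL_mono w z : weak_le w z -> weak_le (resL w) (resL z).
Proof.
move=> le; apply/weak_leP => a b; rewrite !invn_resL => /andP[-> /(leI le)] //.
Qed.

Lemma resH_mono w z : weak_le w z -> weak_le (resH w) (resH z).
Proof. by move=> le; apply/weak_leP => a b; rewrite !invn_resH => /(leI le). Qed.

End Res.

Definition pb (P : Prop) : bool := if excluded_middle_informative P then true else false.
Lemma pbP (P : Prop) : reflect P (pb P).
Proof. by rewrite /pb; case: excluded_middle_informative => h; constructor. Qed.

Section Join.
Variable n : nat.
Variables u w : 'S_n.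
Definition Ej (a b : nat) : Prop := invn u a b || invn w a b.
Definition Kj (a b : nat) : bool := pb (clos_trans nat Ej a b).

Lemma Ej_lt a b : Ej a b -> (a < b) && (b < n).
Proof.
by case/orP => h; rewrite (invn_lt h) (invn_n h).
Qed.

Lemma ct_lt a b : clos_trans nat Ej a b -> (a < b) && (b < n).
Proof.
elim => [x y /Ej_lt //| x y z _ /andP[h1 h2] _ /andP[h3 h4]].
by rewrite h4 (ltn_trans h1 h3).
Qed.

Lemma ct_co a c : clos_trans nat Ej a c -> forall b, a < b -> b < c ->
  clos_trans nat Ej a b \/ clos_trans nat Ej b c.
Proof.
move=> h0; have {h0} := clos_trans_t1n _ _ _ _ h0; elim => [x y h | x y z h hyz IH] b xb bc.
- case/orP: h => h.
  + by case: (invn_valid u) => _ _ C; case/orP: (C _ _ _ xb bc h) => h';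
      [left | right]; apply: t_step; rewrite /Ej h'.
  + by case: (invn_valid w) => _ _ C; case/orP: (C _ _ _ xb bc h) => h';
      [left | right]; apply: t_step; rewrite /Ej h' ?orbT.
- have xy := andP (Ej_lt h).
  case: (ltngtP b y) => yb.
  + case/orP: h => h.
    * case: (invn_valid u) => _ _ C; case/orP: (C _ _ _ xb yb h) => h'.
      - by left; apply: t_step; rewrite /Ej h'.
      - by right; apply: (t_trans _ _ _ y); [apply: t_step; rewrite /Ej h' | exact: clos_t1n_trans hyz].
    * case: (invn_valid w) => _ _ C; case/orP: (C _ _ _ xb yb h) => h'.
      - by left; apply: t_step; rewrite /Ej h' orbT.
      - by right; apply: (t_trans _ _ _ y); [apply: t_step; rewrite /Ej h' orbT | exact: clos_t1n_trans hyz].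
  + case: (IH b yb bc) => h'; last by right.
    by left; apply: (t_trans _ _ _ y) h'; apply: t_step.
  + by subst b; left; apply: t_step.
Qed.

Lemma Kj_valid : valid n Kj.
Proof.
split.
- by move=> a b /pbP /ct_lt.
- by move=> a b c /pbP h1 /pbP h2; apply/pbP; apply: t_trans h1 h2.
- move=> a b c ab bc /pbP h; case: (ct_co h ab bc) => h'; apply/orP;
    [left | right]; exact/pbP.
Qed.

Lemma join_exists : exists j, is_join u w j.
Proof.
exists (perm_of_rel n Kj); split.
- apply/weak_leP => a b h; rewrite (invn_pofr Kj_valid); apply/pbP; constructor 1; by rewrite /Ej h.
- apply/weak_leP => a b h; rewrite (invn_pofr Kj_valid); apply/pbP; constructor 1; by rewrite /Ej h orbT.
- move=> z lu lw; apply/weak_leP => a b; rewrite (invn_pofr Kj_valid) => /pbP.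
  elim => [x y | x y t _ h1 _ h2].
  + by case/orP => h; [apply: (leI lu) | apply: (leI lw)].
  + by case: (invn_valid z) => _ T _; apply: T h1 h2.
Qed.

End Join.

Lemma cong_pull m n (f : 'S_m -> 'S_n) (R : 'S_n -> 'S_n -> Prop) :
  lattice_congruence R ->
  (forall x y j, is_join x y j -> is_join (f x) (f y) (f j)) ->
  (forall x y j, is_meet x y j -> is_meet (f x) (f y) (f j)) ->
  lattice_congruence (fun x y => R (f x) (f y)).
Proof.
case=> Rr Rs Rt Rj Rm Hj Hm; split.
- by move=> x; apply: Rr.
- by move=> x y; apply: Rs.
- by move=> x y z; apply: Rt.
- by move=> x y z jx jy h /Hj h1 /Hj h2; apply: Rj h h1 h2.
- by move=> x y z jx jy h /Hm h1 /Hm h2; apply: Rm h h1 h2.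
Qed.

Section Pres.
Variables p q : nat.

Definition relU (s : 'S_p) a b := ((b < p) && invn s a b) || [&& a < b, p <= b & b < p + q].
Definition relU2 (s : 'S_q) a b := ((p <= a) && invn s (a - p) (b - p)) || [&& a < p, a < b & b < p + q].

Lemma validU s : valid (p + q) (relU s).
Proof.
case: (invn_valid s) => V1 T C; split.
- move=> a b /orP[/andP[bp h] | /and3P[ab _ bpq]]; last by rewrite ab bpq.
  by rewrite (invn_lt h); apply: leq_trans bp (leq_addr _ _).
- move=> a b c /orP[/andP[bp h1] | /and3P[ab pb0 bpq]] /orP[/andP[cp h2] | /and3P[bc cp cpq]].
  + by rewrite /relU cp (T _ _ _ h1 h2).
  + by apply/orP; right; rewrite cp cpq (ltn_trans (invn_lt h1) bc).
  + by exfalso; have := invn_lt h2; lia.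
  + by apply/orP; right; rewrite cp cpq (ltn_trans ab bc).
- move=> a b c ab bc /orP[/andP[cp h] | /and3P[ac cp cpq]].
  + by case/orP: (C _ _ _ ab bc h) => h'; apply/orP; [left|right];
      rewrite /relU h' ?cp ?(ltn_trans bc cp).
  + case: (ltnP b p) => bp.
    * by apply/orP; right; apply/orP; right; rewrite bc cp cpq.
    * by apply/orP; left; apply/orP; right; rewrite ab bp (ltn_trans bc cpq).
Qed.

Lemma validU2 s : valid (p + q) (relU2 s).
Proof.
case: (invn_valid s) => V1 T C; split.
- move=> a b /orP[/andP[pa h] | /and3P[_ ab bpq]]; last by rewrite ab bpq.
  by have := invn_lt h; have := invn_n h; lia.
- move=> a b c /orP[/andP[pa h1] | /and3P[ap ab bpq]] /orP[/andP[pb h2] | /and3P[bp bc cpq]].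
  + by rewrite /relU2 pa (T _ _ _ h1 h2).
  + by exfalso; have := invn_lt h1; lia.
  + apply/orP; right; rewrite ap (ltn_trans ab (_ : b < c)) /=.
      by have := invn_lt h2; have := invn_n h2; lia.
    by have := invn_lt h2; lia.
  + by apply/orP; right; rewrite ap cpq (ltn_trans ab bc).
- move=> a b c ab bc /orP[/andP[pa h] | /and3P[ap ac cpq]].
  + have ab' : a - p < b - p by lia.
    have bc' : b - p < c - p by lia.
    by case/orP: (C _ _ _ ab' bc' h) => h'; apply/orP; [left|right];
      rewrite /relU2 h' ?pa ?(leq_trans pa (ltnW ab)).
  + case: (ltnP b p) => bp.
    * by apply/orP; right; apply/orP; right; rewrite bp bc cpq.
    * by apply/orP; left; apply/orP; right; rewrite ap ab (ltn_trans bc cpq).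
Qed.

Lemma pcat_monoL (s z : 'S_p) (v : 'S_q) : weak_le s z -> weak_le (pcat s v) (pcat z v).
Proof.
move=> le; apply/weak_leP => a b; rewrite !invn_pcat.
by case: ifP => // _; apply: leI.
Qed.

Lemma pcat_monoR (u : 'S_p) (s z : 'S_q) : weak_le s z -> weak_le (pcat u s) (pcat u z).
Proof.
move=> le; apply/weak_leP => a b; rewrite !invn_pcat.
by case: ifP => // _ /andP[-> /(leI le)].
Qed.

Lemma resL_join (w z j : 'S_(p + q)) : is_join w z j -> is_join (resL w) (resL z) (resL j).
Proof.
case=> lw lz least; split; try exact: resL_mono.
move=> s ls1 ls2.
set U := perm_of_rel (p + q) (relU s).
have IU := invn_pofr (validU s).
have ub : forall x : 'S_(p + q), weak_le (resL x) s -> weak_le x U.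
  move=> x le; apply/weak_leP => a b h; rewrite IU /relU.
  case: (ltnP b p) => bp /=.
  + by apply/orP; left; apply: (leI le); rewrite invn_resL bp.
  + by rewrite (invn_lt h) (invn_n h).
have := resL_mono (least _ (ub _ ls1) (ub _ ls2)).
have -> : resL U = s.
  apply: invn_inj => a b; rewrite invn_resL IU /relU.
  case: (ltnP b p) => bp /=; first by rewrite andbF orbF.
  by apply/esym/negbTE/negP => /invn_n; lia.
done.
Qed.

Lemma resL_meet (w z m : 'S_(p + q)) : is_meet w z m -> is_meet (resL w) (resL z) (resL m).
Proof.
case=> lw lz great; split; try exact: resL_mono.
move=> s ls1 ls2.
have lb : forall x : 'S_(p + q), weak_le s (resL x) -> weak_le (pcat s (1 : 'S_q)) x.
  move=> x le; apply/weak_leP => a b; rewrite invn_pcat invn1 andbF.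
  by case: ifP => // bp h; have := leI le h; rewrite invn_resL => /andP[].
have := resL_mono (great _ (lb _ ls1) (lb _ ls2)).
by rewrite resL_pcat.
Qed.

Lemma resH_join (w z j : 'S_(p + q)) : is_join w z j -> is_join (resH w) (resH z) (resH j).
Proof.
case=> lw lz least; split; try exact: resH_mono.
move=> s ls1 ls2.
set U := perm_of_rel (p + q) (relU2 s).
have IU := invn_pofr (validU2 s).
have ub : forall x : 'S_(p + q), weak_le (resH x) s -> weak_le x U.
  move=> x le; apply/weak_leP => a b h; rewrite IU /relU2.
  case: (ltnP a p) => ap /=.
  + by rewrite (invn_lt h) (invn_n h).
  + rewrite orbF; apply: (leI le); rewrite invn_resH !subnKC //.
    by apply: leq_trans ap (ltnW (invn_lt h)).
have := resH_mono (least _ (ub _ ls1) (ub _ ls2)).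
have -> : resH U = s.
  apply: invn_inj => a b; rewrite invn_resH IU /relU2 leq_addr /= !addKn.
  by rewrite ltnNge leq_addr /= orbF.
done.
Qed.

Lemma resH_meet (w z m : 'S_(p + q)) : is_meet w z m -> is_meet (resH w) (resH z) (resH m).
Proof.
case=> lw lz great; split; try exact: resH_mono.
move=> s ls1 ls2.
have lb : forall x : 'S_(p + q), weak_le s (resH x) -> weak_le (pcat (1 : 'S_p) s) x.
  move=> x le; apply/weak_leP => a b; rewrite invn_pcat invn1.
  case: ifP => // bp /andP[pa h]; have pb : p <= b by have := invn_lt h; lia.
  by have := leI le h; rewrite invn_resH !subnKC.
have := resH_mono (great _ (lb _ ls1) (lb _ ls2)).
by rewrite resH_pcat.
Qed.

Lemma pcatL_join (v : 'S_q) (s z j : 'S_p) : is_join s z j -> is_join (pcat s v) (pcat z v) (pcat j v).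
Proof.
case=> l1 l2 least; split; try exact: pcat_monoL.
move=> W h1 h2.
have m1 := resL_mono h1; have m2 := resL_mono h2; rewrite resL_pcat in m1; rewrite resL_pcat in m2.
have le := least _ m1 m2.
apply/weak_leP => a b; rewrite invn_pcat; case: ifP => bp h.
- by move: (leI le h); rewrite invn_resL bp.
- by apply: (leI h1); rewrite invn_pcat bp.
Qed.

Lemma pcatL_meet (v : 'S_q) (s z j : 'S_p) : is_meet s z j -> is_meet (pcat s v) (pcat z v) (pcat j v).
Proof.
case=> l1 l2 great; split; try exact: pcat_monoL.
move=> W h1 h2.
have m1 := resL_mono h1; have m2 := resL_mono h2; rewrite resL_pcat in m1; rewrite resL_pcat in m2.
have le := great _ m1 m2.
apply/weak_leP => a b h; rewrite invn_pcat; case: ifP => bp.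
- by apply: (leI le); rewrite invn_resL bp.
- by move: (leI h1 h); rewrite invn_pcat bp.
Qed.

Lemma pcatR_join (u : 'S_p) (s z j : 'S_q) : is_join s z j -> is_join (pcat u s) (pcat u z) (pcat u j).
Proof.
case=> l1 l2 least; split; try exact: pcat_monoR.
move=> W h1 h2.
have m1 := resH_mono h1; have m2 := resH_mono h2; rewrite resH_pcat in m1; rewrite resH_pcat in m2.
have le := least _ m1 m2.
apply/weak_leP => a b; rewrite invn_pcat; case: ifP => bp.
- by move=> h; apply: (leI h1); rewrite invn_pcat bp.
- move=> /andP[pa h]; have pb : p <= b by have := invn_lt h; lia.
  by move: (leI le h); rewrite invn_resH !subnKC.
Qed.

Lemma pcatR_meet (u : 'S_p) (s z j : 'S_q) : is_meet s z j -> is_meet (pcat u s) (pcat u z) (pcat u j).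
Proof.
case=> l1 l2 great; split; try exact: pcat_monoR.
move=> W h1 h2.
have m1 := resH_mono h1; have m2 := resH_mono h2; rewrite resH_pcat in m1; rewrite resH_pcat in m2.
have le := great _ m1 m2.
apply/weak_leP => a b h; rewrite invn_pcat; case: ifP => bp.
- by move: (leI h1 h); rewrite invn_pcat bp.
- have := leI h1 h; rewrite invn_pcat bp => /andP[pa _]; rewrite pa /=.
  apply: (leI le); rewrite invn_resH !subnKC //.
  by apply: leq_trans pa (ltnW (invn_lt h)).
Qed.

End Pres.

Section Helpers.
Variable n : nat.
Implicit Types x y z : 'S_n.

Lemma is_join_le x y : weak_le x y -> is_join x y y.
Proof. by move=> h; split; [done | apply: weak_le_refl | move=> z _]. Qed.

Lemma is_join_ge x y : weak_le y x -> is_join x y x.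
Proof. by move=> h; split; [apply: weak_le_refl | done | move=> z]. Qed.

Lemma is_meet_le x y : weak_le x y -> is_meet x y x.
Proof. by move=> h; split; [apply: weak_le_refl | done | move=> z]. Qed.

Lemma is_meet_ge x y : weak_le y x -> is_meet x y y.
Proof. by move=> h; split; [done | apply: weak_le_refl | move=> z _]. Qed.

Lemma is_join_sym x y j : is_join x y j -> is_join y x j.
Proof. by case=> h1 h2 h3; split => // z a b; apply: h3. Qed.

Lemma weak_le1 x : weak_le 1 x.
Proof. by apply/weak_leP => a b; rewrite invn1. Qed.

End Helpers.

Lemma join_blocks p q (s : 'S_p) (v : 'S_q) :
  is_join (pcat s (1 : 'S_q)) (pcat (1 : 'S_p) v) (pcat s v).
Proof.
split.
- by apply: pcat_monoR; apply: weak_le1.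
- by apply: pcat_monoL; apply: weak_le1.
- move=> W h1 h2; apply/weak_leP => a b; rewrite invn_pcat; case: ifP => bp h.
  + by apply: (leI h1); rewrite invn_pcat bp.
  + by apply: (leI h2); rewrite invn_pcat bp.
Qed.

Section TrC.
Variable C : forall k, {set 'S_k}.

Lemma Tr_cong n : lattice_congruence (@Tr C n).
Proof.
split.
- by move=> x R [Rr _ _ _ _] _.
- by move=> x y H R HR H2; case: (HR) => _ Rs _ _ _; apply: Rs; apply: H.
- by move=> x y z H1 H2 R HR H; case: (HR) => _ _ Rt _ _; apply: Rt (H1 R HR H) (H2 R HR H).
- by move=> x y z jx jy H j1 j2 R HR H'; case: (HR) => _ _ _ Rj _; apply: Rj (H R HR H') j1 j2.
- by move=> x y z jx jy H j1 j2 R HR H'; case: (HR) => _ _ _ _ Rm; apply: Rm (H R HR H') j1 j2.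
Qed.

Lemma Tr_contracts n (g : 'S_n) : join_irreducible g ->
  (exists k (c : 'S_k), c \in C k /\ translate_of g c) ->
  forall g0, covers g0 g -> Tr C g0 g.
Proof.
move=> ji ex g0 cov R HR H.
have [g1 [c1 r1]] := H g ji ex.
by rewrite (JI_cover_uniq ji cov c1).
Qed.

End TrC.

Section Back.
Variable C : forall k, {set 'S_k}.
Hypothesis HC : forall k (c : 'S_k), c \in C k -> untranslated c && join_irreducible c.

Lemma transl_desc n (g : 'S_n) k (c : 'S_k) : c \in C k -> translate_of g c ->
  exists a b (E : a + k + b = n), g = cast_perm E (tr a b c) /\ desc g a (a + k.-1) /\
    (forall x y, desc g x y -> x = a /\ y = a + k.-1).
Proof.
move=> cC [a [b [E gE]]].
case/andP: (HC cC) => ut ji.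
have [d U] := untrJI ut ji.
exists a, b, E; split => //; split.
- by rewrite gE desc_cast desc_tr leqnn subnn addKn.
- move=> x y; rewrite gE desc_cast desc_tr => /andP[ax dd].
  have := invn_lt (andP dd).1 => h.
  case: (U _ _ dd) => e1 e2; split; lia.
Qed.

Lemma Tr_refl n (x : 'S_n) : Tr C x x.
Proof. by case: (Tr_cong C n). Qed.

Lemma TrL p q (X Y : 'S_(p + q)) : Tr C X Y -> Tr C (resL X) (resL Y).
Proof.
move=> H; apply: (H (fun w w' => Tr C (resL w) (resL w'))).
  by apply: cong_pull; [apply: Tr_cong | apply: resL_join | apply: resL_meet].
move=> g ji [k [c [cC trg]]].
have [a [b [E [gE [d U]]]]] := transl_desc cC trg.
have k2 : 1 < k by have := invn_lt (andP d).1; lia.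
set a' := a + k.-1.
set g0 := perm_of_rel (p + q) (minus (invn g) a a').
have Ig0 := invn_pofr (desc_valid d).
exists g0; split; first exact: desc_covers d.
case: (leqP (a + k) p) => akp.
- have E' : a + k + (p - (a + k)) = p by rewrite subnKC.
  have rg : resL g = cast_perm E' (tr a (p - (a + k)) c).
    apply: invn_inj => x y; rewrite invn_resL invn_cast invn_tr gE invn_cast invn_tr.
    case: (boolP (a <= x)) => ax /=; last by rewrite andbF.
    case: (boolP (invn c (x - a) (y - a))) => h; last by rewrite andbF.
    by rewrite andbT; have := invn_n h; lia.
  have jig : join_irreducible (resL g).
    by rewrite rg JI_cast; apply/JI_tr; case/andP: (HC cC).
  have cov : covers (resL g0) (resL g).
    apply: (@covers_minus _ _ _ a a').
      by rewrite invn_resL (andP d).1 andbT /a'; lia.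
    move=> x y; rewrite /minus !invn_resL Ig0 /minus.
    by rewrite andbA.
  apply: (Tr_contracts jig _ cov).
  by exists k, c; split => //; exists a, (p - (a + k)), E'.
- have -> : resL g0 = resL g.
    apply: invn_inj => x y; rewrite !invn_resL Ig0 /minus.
    case: (ltnP y p) => yp //=.
    have -> : (y != a') by apply/eqP => e; rewrite /a' in e; lia.
    by rewrite orbT andbT.
  exact: Tr_refl.
Qed.

Lemma TrH p q (X Y : 'S_(p + q)) : Tr C X Y -> Tr C (resH X) (resH Y).
Proof.
move=> H; apply: (H (fun w w' => Tr C (resH w) (resH w'))).
  by apply: cong_pull; [apply: Tr_cong | apply: resH_join | apply: resH_meet].
move=> g ji [k [c [cC trg]]].
have [a [b [E [gE [d U]]]]] := transl_desc cC trg.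
have k2 : 1 < k by have := invn_lt (andP d).1; lia.
set a' := a + k.-1.
set g0 := perm_of_rel (p + q) (minus (invn g) a a').
have Ig0 := invn_pofr (desc_valid d).
exists g0; split; first exact: desc_covers d.
case: (leqP p a) => pa.
- have E' : (a - p) + k + b = q by lia.
  have rg : resH g = cast_perm E' (tr (a - p) b c).
    apply: invn_inj => x y; rewrite invn_resH invn_cast invn_tr gE invn_cast invn_tr.
    have -> : (a <= p + x) = (a - p <= x) by apply/idP/idP; lia.
    have e1 : p + x - a = x - (a - p) by lia.
    have e2 : p + y - a = y - (a - p) by lia.
    by rewrite e1 e2.
  have jig : join_irreducible (resH g).
    by rewrite rg JI_cast; apply/JI_tr; case/andP: (HC cC).
  have cov : covers (resH g0) (resH g).
    apply: (@covers_minus _ _ _ (a - p) (a' - p)).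
      by rewrite invn_resH !subnKC ?(andP d).1 // /a'; lia.
    move=> x y; rewrite /minus !invn_resH Ig0 /minus /a'.
    case: (invn g (p + x) (p + y)) => //=.
    have -> : (p + x != a) = (x != a - p) by apply/idP/idP => /eqP h; apply/eqP; lia.
    have -> : (p + y != a + k.-1) = (y != a + k.-1 - p) by apply/idP/idP => /eqP h; apply/eqP; lia.
    done.
  apply: (Tr_contracts jig _ cov).
  by exists k, c; split => //; exists (a - p), b, E'.
- have -> : resH g0 = resH g.
    apply: invn_inj => x y; rewrite !invn_resH Ig0 /minus.
    have -> : (p + x != a) by apply/eqP => e; lia.
    by rewrite orTb andbT.
  exact: Tr_refl.
Qed.

End Back.

Section Back2.
Variable C : forall k, {set 'S_k}.
Hypothesis HC : forall k (c : 'S_k), c \in C k -> untranslated c && join_irreducible c.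

Lemma Tr_stepL p q (u u' : 'S_p) (v : 'S_q) : Tr C u u' -> Tr C (pcat u v) (pcat u' v).
Proof.
move=> Hu; apply: (Hu (fun s t => Tr C (pcat s v) (pcat t v))).
  by apply: cong_pull; [apply: Tr_cong | apply: pcatL_join | apply: pcatL_meet].
move=> g ji [k [c [cC trg]]].
have [a [b [E [gE [d U]]]]] := transl_desc HC cC trg.
have k2 : 1 < k by have := invn_lt (andP d).1; lia.
set a' := a + k.-1.
set g0 := perm_of_rel p (minus (invn g) a a').
have Ig0 := invn_pofr (desc_valid d).
exists g0; split; first exact: desc_covers d.
set G := pcat g (1 : 'S_q).
have E2 : a + k + (b + q) = p + q by rewrite -E !addnA.
have GE : G = cast_perm E2 (tr a (b + q) c).
  apply: invn_inj => x y; rewrite invn_pcat invn1 andbF invn_cast invn_tr gE invn_cast invn_tr.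
  case: ifP => // yp; apply/esym/negbTE/negP => /andP[ax h]; have := invn_n h; lia.
have jiG : join_irreducible G by rewrite GE JI_cast; apply/JI_tr; case/andP: (HC cC).
have cov : covers (pcat g0 (1 : 'S_q)) G.
  apply: (@covers_minus _ _ _ a a').
    by rewrite invn_pcat (andP d).1 (_ : a' < p) //; have := invn_n (andP d).1; lia.
  move=> x y; rewrite /minus !invn_pcat Ig0 !invn1 !andbF /minus.
  by case: ifP.
have := Tr_contracts jiG (ex_intro _ k (ex_intro _ c (conj cC (ex_intro _ a
   (ex_intro _ (b + q) (ex_intro _ E2 GE)))))) cov.
move=> H0.
case: (Tr_cong C (p + q)) => _ _ _ Rj _.
exact: Rj H0 (join_blocks g0 v) (join_blocks g v).
Qed.

Lemma Tr_stepR p q (u : 'S_p) (v v' : 'S_q) : Tr C v v' -> Tr C (pcat u v) (pcat u v').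
Proof.
move=> Hv; apply: (Hv (fun s t => Tr C (pcat u s) (pcat u t))).
  by apply: cong_pull; [apply: Tr_cong | apply: pcatR_join | apply: pcatR_meet].
move=> g ji [k [c [cC trg]]].
have [a [b [E [gE [d U]]]]] := transl_desc HC cC trg.
have k2 : 1 < k by have := invn_lt (andP d).1; lia.
set a' := a + k.-1.
set g0 := perm_of_rel q (minus (invn g) a a').
have Ig0 := invn_pofr (desc_valid d).
exists g0; split; first exact: desc_covers d.
set G := pcat (1 : 'S_p) g.
have E2 : (p + a) + k + b = p + q by rewrite -E !addnA.
have GE : G = cast_perm E2 (tr (p + a) b c).
  apply: invn_inj => x y; rewrite invn_pcat invn1 invn_cast invn_tr gE invn_cast invn_tr.
  case: ifP => yp.
    by apply/esym/negbTE/negP => /andP[ax h]; have := invn_lt h; lia.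
  have -> : x - p - a = x - (p + a) by lia.
  have -> : y - p - a = y - (p + a) by lia.
  rewrite andbA; congr (_ && _); apply/idP/idP.
    by move/andP => [h1 h2]; lia.
  by move=> h; apply/andP; split; lia.
have jiG : join_irreducible G by rewrite GE JI_cast; apply/JI_tr; case/andP: (HC cC).
have cov : covers (pcat (1 : 'S_p) g0) G.
  apply: (@covers_minus _ _ _ (p + a) (p + a')).
    by rewrite invn_pcat ltnNge leq_addr /= leq_addr /= !addKn (andP d).1.
  move=> x y; rewrite /minus !invn_pcat Ig0 !invn1 /minus.
  case: ifP => //= yp; case: (boolP (p <= x)) => //= px.
  have -> : (x - p != a) = (x != p + a) by apply/idP/idP => /eqP h; apply/eqP; lia.
  have -> : (y - p != a') = (y != p + a') by apply/idP/idP => /eqP h; apply/eqP; lia.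
  done.
have := Tr_contracts jiG (ex_intro _ k (ex_intro _ c (conj cC (ex_intro _ (p + a)
   (ex_intro _ b (ex_intro _ E2 GE)))))) cov.
move=> H0.
case: (Tr_cong C (p + q)) => _ _ _ Rj _.
exact: Rj H0 (is_join_sym (join_blocks u g0)) (is_join_sym (join_blocks u g)).
Qed.

Lemma Tr_translational : translational (fun n => @Tr C n).
Proof.
move=> p q u u' v v'; split.
- move=> H; split.
  + by have := TrL HC H; rewrite !resL_pcat.
  + by have := TrH HC H; rewrite !resH_pcat.
- case=> Hu Hv; case: (Tr_cong C (p + q)) => _ _ Rt _ _.
  exact: Rt (Tr_stepL v Hu) (Tr_stepR u' Hv).
Qed.

End Back2.

Lemma in_inv_set n (w : 'S_n) (a b : 'I_n) : ((a, b) \in inv_set w) = invn w a b.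
Proof. by rewrite inE /= /invn -!posnE ltn_ord. Qed.

Section CoverStep.
Variable n : nat.
Variable b : 'S_n.
Variables x y : nat.
Hypothesis hd : desc b x y.

Definition Ij s t := [&& s < t, x <= s, t <= y, posn b t <= posn b y & posn b x <= posn b s].

Lemma hd1 : invn b x y. Proof. by case/andP: hd. Qed.
Lemma hd2 : posn b x = (posn b y).+1. Proof. by case/andP: hd => _ /eqP. Qed.
Lemma hxy : x < y. Proof. exact: invn_lt hd1. Qed.
Lemma hyn : y < n. Proof. exact: invn_n hd1. Qed.

Lemma Ij_b s t : Ij s t -> invn b s t.
Proof.
case/and5P => st xs ty pt ps; rewrite /invn st /=.
have := hd2; have := hyn; lia.
Qed.

Lemma Ij_xy : Ij x y.
Proof. by rewrite /Ij hxy !leqnn. Qed.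

Lemma posn_ne s t : s < n -> t < n -> s != t -> posn b s != posn b t.
Proof. by move=> sn tn st; apply/eqP => /(posn_inj sn tn) E; rewrite E eqxx in st. Qed.

Lemma Ij_valid : valid n Ij.
Proof.
have yn := hyn; have p2 := hd2.
split.
- move=> s t /and5P[st xs ty _ _]; rewrite st /=; lia.
- move=> s m t /and5P[sm xs my pm ps] /and5P[mt xm ty pt pm2].
  by rewrite /Ij (ltn_trans sm mt) xs ty pt ps.
- move=> s m t sm mt /and5P[st xs ty pt ps].
  case: (leqP (posn b m) (posn b y)) => pm.
  + by rewrite /Ij sm xs pm ps /=; apply/orP; left; apply/andP; split => //; lia.
  + apply/orP; right; rewrite /Ij mt ty pt /=; apply/andP; split; lia.
Qed.

Lemma Ijm_valid : valid n (minus Ij x y).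
Proof.
have yn := hyn; have p2 := hd2; have xy := hxy.
case: Ij_valid => V1 T Co; split.
- by move=> s t /andP[/V1].
- move=> s m t /andP[h1 _] /andP[h2 _]; rewrite /minus (T _ _ _ h1 h2) /=.
  case: (eqVneq s x) => [e1|//]; case: (eqVneq t y) => [e2|//]; subst s t; exfalso.
  move: h1 h2 => /and5P[_ _ _ a1 _] /and5P[_ _ _ _ a2]; lia.
- move=> s m t sm mt /andP[h hn]; rewrite /minus.
  have := h => /and5P[st xs ty pt ps].
  case/orP: (Co _ _ _ sm mt h) => h'.
  + rewrite h' /=; case: (eqVneq s x) => [e1|//]; case: (eqVneq m y) => [e2|//].
    by subst; exfalso; lia.
  + rewrite h' /= orbC; case: (eqVneq m x) => [e1|//]; case: (eqVneq t y) => [e2|//].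
    by subst; exfalso; lia.
Qed.

Definition jj := perm_of_rel n Ij.
Definition jst := perm_of_rel n (minus Ij x y).
Definition aa := perm_of_rel n (minus (invn b) x y).

Lemma Ijj s t : invn jj s t = Ij s t. Proof. by rewrite /jj (invn_pofr Ij_valid). Qed.
Lemma Ijst s t : invn jst s t = minus Ij x y s t. Proof. by rewrite /jst (invn_pofr Ijm_valid). Qed.
Lemma Iaa s t : invn aa s t = minus (invn b) x y s t. Proof. by rewrite /aa (invn_pofr (desc_valid hd)). Qed.

Lemma jj_le_b : weak_le jj b.
Proof. by apply/weak_leP => s t; rewrite Ijj; apply: Ij_b. Qed.

Lemma meet1 : is_meet aa jj jst.
Proof.
split.
- apply/weak_leP => s t; rewrite Ijst Iaa /minus => /andP[/Ij_b -> ->] //.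
- by apply/weak_leP => s t; rewrite Ijst Ijj => /andP[].
- move=> z h1 h2; apply/weak_leP => s t h.
  move: (leI h1 h) (leI h2 h); rewrite Iaa Ijj Ijst /minus => /andP[_ ->] ->.
  done.
Qed.

Lemma covers_jst : covers jst jj.
Proof.
apply: (@covers_minus _ _ _ x y); first by rewrite Ijj Ij_xy.
by move=> s t; rewrite Ijst /minus Ijj.
Qed.

Lemma desc_jj : desc jj x y.
Proof.
have [x' [y' [d E]]] := covers_char covers_jst.
have E2 : forall s t, minus (invn jj) x y s t = minus (invn jj) x' y' s t.
  by move=> s t; rewrite -E Ijst /minus Ijj.
have h0 : invn jj x y by rewrite Ijj Ij_xy.
by case: (minus_eq h0 (andP d).1 E2) => e1 e2; rewrite e1 e2.
Qed.

Lemma JI_jj : join_irreducible jj.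
Proof.
apply/JI_desc; exists x, y; split; first exact: desc_jj.
move=> s t d; have V := desc_valid d.
have [_ _ Co] := V.
have yn := hyn; have p2 := hd2; have xy := hxy.
have h : Ij s t by rewrite -Ijj; case/andP: d.
move: (h) => /and5P[st xs ty pt ps].
case: (eqVneq s x) => [es|ns].
- subst s; split => //; case: (eqVneq t y) => [//|nt]; exfalso.
  have ty' : t < y by lia.
  have nt' : (y != t) by rewrite eq_sym.
  have := Co _ _ _ st ty'; rewrite /minus !Ijj Ij_xy nt' orbT.
  move=> /(_ isT) /orP[|/andP[/and5P[_ _ _ _ q] _]]; first by rewrite !eqxx andbF.
  lia.
- exfalso.
  have xs' : x < s by lia.
  have Ixt : Ij x t by rewrite /Ij (ltn_trans xs' st) leqnn ty pt leqnn.
  have ns' : (x != s) by rewrite eq_sym.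
  have := Co _ _ _ xs' st; rewrite /minus !Ijj Ixt ns' /=.
  move=> /(_ isT) /orP[/andP[/and5P[_ _ _ q _] _]|]; last by rewrite !eqxx andbF.
  lia.
Qed.

Lemma join2 : is_join jj aa b.
Proof.
split; first exact: jj_le_b.
- by apply/weak_leP => s t; rewrite Iaa => /andP[].
- move=> z h1 h2; apply/weak_leP => s t h.
  case: (boolP ((s != x) || (t != y))) => e.
  + by apply: (leI h2); rewrite Iaa /minus h e.
  + move: e; rewrite negb_or !negbK => /andP[/eqP -> /eqP ->].
    by apply: (leI h1); rewrite Ijj Ij_xy.
Qed.

Definition kk := y.+1 - x.
Definition Ic s t := Ij (s + x) (t + x).

Lemma Ic_valid : valid kk Ic.
Proof.
case: Ij_valid => V1 T Co; split.
- move=> s t /and5P[st xs ty _ _]; rewrite /kk; apply/andP; split; lia.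
- by move=> s m t; apply: T.
- by move=> s m t sm mt; apply: Co; lia.
Qed.

Definition cc := perm_of_rel kk Ic.
Definition cc0 := perm_of_rel kk (minus Ic 0 kk.-1).

Lemma Icm_valid : valid kk (minus Ic 0 kk.-1).
Proof.
case: Ijm_valid => V1 T Co.
have e : forall s t, minus Ic 0 kk.-1 s t = minus Ij x y (s + x) (t + x).
  move=> s t; rewrite /minus /Ic /kk.
  have -> : (s != 0) = (s + x != x) by apply/idP/idP => /eqP h; apply/eqP; lia.
  have -> : (t != (y.+1 - x).-1) = (t + x != y).
    by apply/idP/idP => /eqP h; apply/eqP; have := hxy; lia.
  done.
split.
- move=> s t; rewrite e => /andP[/and5P[h1 _ h3 _ _] _]; rewrite /kk; apply/andP; split; lia.
- by move=> s m t; rewrite !e; apply: T.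
- by move=> s m t sm mt; rewrite !e; apply: Co; lia.
Qed.

Lemma Ecast : x + kk + (n - y.+1) = n.
Proof. by rewrite /kk; have := hyn; have := hxy; lia. Qed.

Lemma jjE : jj = cast_perm Ecast (tr x (n - y.+1) cc).
Proof.
apply: invn_inj => s t; rewrite Ijj invn_cast invn_tr invn_pofr; last exact: Ic_valid.
rewrite /Ic; case: (leqP x s) => xs /=; last first.
  by case: (boolP (Ij s t)) => // /and5P[]; lia.
case: (leqP x t) => xt; first by rewrite !subnK.
case: (boolP (Ij s t)) => /= h; first by move/and5P: h => []; lia.
by case: (boolP (Ij _ _)) => // /and5P[]; lia.
Qed.

Lemma jstE : jst = cast_perm Ecast (tr x (n - y.+1) cc0).
Proof.
apply: invn_inj => s t; rewrite Ijst invn_cast invn_tr invn_pofr; last exact: Icm_valid.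
rewrite /minus /Ic; case: (leqP x s) => xs /=; last first.
  by case: (boolP (Ij s t)) => // /and5P[]; lia.
case: (leqP x t) => xt; last first.
  case: (boolP (Ij s t)) => /= h; first by move/and5P: h => []; lia.
  by case: (boolP (Ij _ _)) => // /and5P[]; lia.
rewrite !subnK //.
have -> : (s - x != 0) = (s != x) by apply/idP/idP => /eqP h; apply/eqP; lia.
have -> : (t - x != kk.-1) = (t != y).
  by apply/idP/idP => /eqP h; apply/eqP; rewrite /kk in h *; have := hxy; lia.
done.
Qed.

Lemma Icc s t : invn cc s t = Ic s t. Proof. by rewrite /cc (invn_pofr Ic_valid). Qed.
Lemma Icc0 s t : invn cc0 s t = minus Ic 0 kk.-1 s t. Proof. by rewrite /cc0 (invn_pofr Icm_valid). Qed.

Lemma Ic_end : Ic 0 kk.-1.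
Proof. by rewrite /Ic add0n /kk (_ : (y.+1 - x).-1 + x = y) ?Ij_xy //; have := hxy; lia. Qed.

Lemma cc_untr : untranslated cc.
Proof. by apply: (@untr_of_inv _ _ kk.-1 0); rewrite Icc Ic_end. Qed.

Lemma cc_JI : join_irreducible cc.
Proof. by have := JI_jj; rewrite jjE JI_cast => /JI_tr. Qed.

Lemma cc0_covers : covers cc0 cc.
Proof.
apply: (@covers_minus _ _ _ 0 kk.-1); first by rewrite Icc Ic_end.
by move=> s t; rewrite Icc0 /minus Icc.
Qed.

End CoverStep.

Section Fwd.
Unset Implicit Arguments.
Variable Theta : forall n, 'S_n -> 'S_n -> Prop.
Set Implicit Arguments.
Hypothesis Hc : forall n, lattice_congruence (Theta n).
Hypothesis Ht : translational Theta.

Lemma theta_refl n (x : 'S_n) : Theta n x x. Proof. by case: (Hc n). Qed.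

Lemma theta_cast m n (E : m = n) (X Y : 'S_m) :
  Theta n (cast_perm E X) (cast_perm E Y) <-> Theta m X Y.
Proof. by case: n / E; rewrite !cast_perm_id. Qed.

Lemma theta_tr a b k (c0 c : 'S_k) : Theta _ (tr a b c0) (tr a b c) <-> Theta k c0 c.
Proof.
rewrite /tr; split.
- by move/Ht => [/Ht [_ h] _].
- move=> h; apply/Ht; split; last exact: theta_refl.
  by apply/Ht; split; [apply: theta_refl | exact h].
Qed.

Definition Cf k : {set 'S_k} :=
  [set c | untranslated c && join_irreducible c && pb (contracts (Theta k) c)].

Lemma Tr_Theta n (x y : 'S_n) : Tr Cf x y -> Theta n x y.
Proof.
move=> H; apply: H (Hc n) _ => g ji [k [c [cC [a [b [E gE]]]]]].
move: cC; rewrite inE => /andP[_ /pbP [c0 [cov th]]].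
have [x0 [y0 [d Ec0]]] := covers_char cov.
exists (cast_perm E (tr a b c0)); split.
- rewrite gE; apply: (@covers_minus _ _ _ (a + x0) (a + y0)).
    by rewrite invn_cast invn_tr leq_addr !addKn (andP d).1.
  move=> s t; rewrite /minus !invn_cast !invn_tr Ec0 /minus.
  case: (boolP (a <= s)) => //= ass; case: (boolP (invn c (s - a) (t - a))) => //= h.
  have := invn_lt h => st.
  have -> : (s - a != x0) = (s != a + x0) by apply/idP/idP => /eqP e; apply/eqP; lia.
  have -> : (t - a != y0) = (t != a + y0) by apply/idP/idP => /eqP e; apply/eqP; lia.
  done.
- by rewrite gE; apply/theta_cast; apply/theta_tr.
Qed.

Section Main.
Variable n : nat.
Variable R : 'S_n -> 'S_n -> Prop.
Hypothesis HR : lattice_congruence R.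
Hypothesis Hcontr : forall g : 'S_n, join_irreducible g ->
  (exists k (c : 'S_k), c \in Cf k /\ translate_of g c) -> contracts R g.

Lemma cover_step (b : 'S_n) x y : desc b x y -> Theta n (aa b x y) b -> R (aa b x y) b.
Proof.
move=> hd th.
case: (Hc n) => _ _ _ _ Tm.
have th2 : Theta n (jst b x y) (jj b x y).
  exact: Tm _ _ _ _ _ th (meet1 hd) (is_meet_ge (jj_le_b hd)).
have cC : cc b x y \in Cf (kk x y).
  rewrite inE (cc_untr hd) (cc_JI hd) /=; apply/pbP; exists (cc0 b x y); split.
    exact: cc0_covers hd.
  by move: th2; rewrite (jstE hd) (jjE hd) => /theta_cast /theta_tr.
have trj : translate_of (jj b x y) (cc b x y).
  by exists x, (n - y.+1), (Ecast hd); exact: jjE.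
have [g1 [c1 r1]] := Hcontr (JI_jj hd) (ex_intro _ _ (ex_intro _ _ (conj cC trj))).
have e := JI_cover_uniq (JI_jj hd) c1 (covers_jst hd).
rewrite e in r1.
case: HR => _ _ _ Rj _.
case: (meet1 hd) => l1 _ _.
exact: Rj r1 (is_join_le l1) (join2 hd).
Qed.

Lemma down N : forall (u M : 'S_n), #|inv_set M| < N -> weak_le u M -> Theta n u M -> R u M.
Proof.
elim: N => // N IH u M hN le th.
case: (eqVneq u M) => [-> | ne]; first by case: HR.
have [x [y [d nu]]] := desc_exists le ne.
set M' := aa M x y.
have le' : weak_le u M'.
  apply/weak_leP => s t h; rewrite (Iaa d) /minus (leI le h) /=.
  case: (eqVneq s x) => [es|//]; case: (eqVneq t y) => [et|//]; subst.
  by rewrite h in nu.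
have leM : weak_le M' M by apply/weak_leP => s t; rewrite (Iaa d) => /andP[].
case: (Hc n) => _ Ts Tt _ Tm.
have thu : Theta n u M' := Tm _ _ _ _ _ th (is_meet_le le') (is_meet_ge leM).
have thM : Theta n M' M := Tt _ _ _ (Ts _ _ thu) th.
have r1 := cover_step d thM.
have card : #|inv_set M'| < #|inv_set M|.
  apply: proper_card; apply/properP; split; first exact: leM.
  have yn := invn_n (andP d).1; have xn := ltn_trans (invn_lt (andP d).1) yn.
  exists (Ordinal xn, Ordinal yn); rewrite in_inv_set //=; first exact: (andP d).1.
  by rewrite (Iaa d) /minus !eqxx andbF.
have r2 := IH u M' (leq_trans card hN) le' thu.
by case: HR => _ _ Rt _ _; apply: Rt r2 r1.
Qed.

End Main.

Lemma Theta_Tr n (x y : 'S_n) : Theta n x y -> Tr Cf x y.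
Proof.
move=> th R HR Hcontr.
have [J hj] := join_exists x y.
case: (Hc n) => Tr0 Ts Tt Tj Tm.
have t1 : Theta n J y := Tj _ _ _ _ _ th hj (is_join_le (weak_le_refl y)).
have t2 : Theta n x J := Tj _ _ _ _ _ th (is_join_le (weak_le_refl x)) (is_join_sym hj).
case: hj => lxJ lyJ _.
have r1 := down HR Hcontr (ltnSn _) lxJ t2.
have r2 := down HR Hcontr (ltnSn _) lyJ (Ts _ _ t1).
by case: HR => _ Rs Rt _ _; apply: Rt r1 (Rs _ _ r2).
Qed.

End Fwd.

Local Close Scope group_scope.
Unset Implicit Arguments.

Theorem proposition7p1 (Theta : forall n, 'S_n -> 'S_n -> Prop) :
  (forall n, lattice_congruence (Theta n)) ->
  (translational Theta <->
   exists C : forall k, {set 'S_k},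
     (forall k (c : 'S_k), c \in C k -> untranslated c && join_irreducible c) /\
     (forall n (x y : 'S_n), Theta n x y <-> Tr C x y)).
Proof.
move=> Hc; split.
- move=> Ht; exists (Cf Theta); split.
  + by move=> k c; rewrite inE => /andP[/andP[-> ->] _].
  + move=> n x y; split; [exact: Theta_Tr | exact: Tr_Theta].
- case=> C [HC E] p q u u' v v'.
  have T0 := Tr_translational HC; rewrite /translational in T0; have T := T0 p q u u' v v'.
  split.
  + by move/E/T => [h1 h2]; split; apply/E.
  + by case=> /E h1 /E h2; apply/E; apply/T.
Qed.
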